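(* Let $G$ be a finite $2$-group and $\omega\in H^3(G,\mathbb{C}^\times)$, and suppose $\mathcal{Z}:=\mathcal{Z}(\mathrm{Vec}_G^\omega)$ has set of twists exactly $\{1,i,-i\}$. Then every simple object of the canonical Lagrangian subcategory $\mathrm{Rep}(G)\subset\mathcal{Z}$ is self-dual.
   Context: $\mathcal{Z}(\mathrm{Vec}_G^\omega)$ is the Drinfeld center of the category of $G$-graded vector spaces with associator twisted by $\omega$, a modular fusion category. The canonical Lagrangian subcategory is the fusion subcategory whose simple objects are the simple summands of $I(\mathbbm{1})$, where $I$ is the induction functor (adjoint of the forgetful functor $\mathcal{Z}(\mathrm{Vec}_G^\omega)\to\mathrm{Vec}_G^\omega$); it is braided equivalent to $\mathrm{Rep}(G)$ (Tannakian). *)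

(* Defs.v *)
From HB Require Import structures.
From mathcomp Require Import all_boot all_order all_algebra all_fingroup all_solvable all_field all_character.
Set Implicit Arguments. Unset Strict Implicit. Unset Printing Implicit Defensive.
Import Order.TTheory GRing.Theory Num.Theory.
Local Open Scope ring_scope.

(* Concrete (Dijkgraaf-Pasquier-Roche) model of Z(Vec_G^omega) = Rep(D^omega(G)).
   Scalars are algC (algebraic complex numbers), a model of C for all
   finite-group representation theory. *)

(* A normalized C^x-valued 3-cocycle on G (every class in H^3(G,C^x) has
   such a representative). *)
Definition normalized_3cocycle (gT : finGroupType) (G : {set gT})
    (w : gT -> gT -> gT -> algC) : Prop :=
  [/\ (forall x y z, x \in G -> y \in G -> z \in G -> w x y z != 0%R),
      (forall x y z t, x \in G -> y \in G -> z \in G -> t \in G ->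
         (w y z t * w x (y * z)%g t * w x y z = w (x * y)%g z t * w x y (z * t)%g)%R)
    & (forall x y, x \in G -> y \in G ->
         [/\ w 1%g x y = 1%R, w x 1%g y = 1%R & w x y 1%g = 1%R])].

(* The 2-cocycle on the centralizer C_G(a) induced by w (transgression):
   theta_a(x,y) = w(a,x,y) w(x,y,a) / w(x,a,y). *)
Definition theta_cocycle (gT : finGroupType) (w : gT -> gT -> gT -> algC)
    (a : gT) : gT -> gT -> algC :=
  fun x y => (w a x y * w x y a / w x a y)%R.

Definition proj_rep (gT : finGroupType) (C : {set gT}) (alpha : gT -> gT -> algC)
    n (rho : gT -> 'M[algC]_n) : Prop :=
  rho 1%g = 1%:M /\
  forall x y, x \in C -> y \in C -> (rho x *m rho y = alpha x y *: rho (x * y)%g)%R.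

Definition proj_irr (gT : finGroupType) (C : {set gT}) n
    (rho : gT -> 'M[algC]_n) : Prop :=
  (0 < n)%N /\
  forall U : 'M[algC]_n, (forall x, x \in C -> (U *m rho x <= U)%MS) ->
    \rank U = 0%N \/ \rank U = n.

(* Simple objects of Z(Vec_G^w): pairs (a, rho), a in G, rho an irreducible
   theta_a-projective representation of C_G(a); their twist is the scalar
   by which rho(a) acts. [is_twist G w t] : t is the twist of some simple. *)
Definition is_twist (gT : finGroupType) (G : {group gT})
    (w : gT -> gT -> gT -> algC) (t : algC) : Prop :=
  exists a, a \in G /\
  exists n (rho : gT -> 'M[algC]_n),
    [/\ proj_rep ('C_G[a])%g (theta_cocycle w a) rho, proj_irr ('C_G[a])%g rho
      & rho a = t%:M].

Lemma dual_mx_repr (gT : finGroupType) (G : {group gT}) n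
    (rG : mx_representation algC G n) :
  mx_repr G (fun g => (rG g^-1%g)^T).
Proof.
split; first by rewrite invg1 repr_mx1 trmx1.
move=> x y Gx Gy /=; by rewrite invMg repr_mxM ?groupV // trmx_mul.
Qed.

Definition dual_repr (gT : finGroupType) (G : {group gT}) n
    (rG : mx_representation algC G n) : mx_representation algC G n :=
  MxRepresentation (dual_mx_repr rG).

(* Main.v *)
Require Import Defs.
From HB Require Import structures.
From mathcomp Require Import all_boot all_order all_algebra all_fingroup all_solvable all_field all_character.
From mathcomp Require Import ring.
From Stdlib Require Import Classical.
Set Implicit Arguments. Unset Strict Implicit. Unset Printing Implicit Defensive.
Import Order.TTheory GRing.Theory Num.Theory.
Local Open Scope ring_scope.

Section Cocycle.
Variables (gT : finGroupType) (G : {group gT}) (w : gT -> gT -> gT -> algC).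
Hypothesis hw : normalized_3cocycle G w.
Variable a : gT.
Hypothesis aG : a \in G.

Local Notation th := (theta_cocycle w a).
Local Notation C := ('C_G[a])%g.

Lemma w_neq0 x y z : x \in G -> y \in G -> z \in G -> w x y z != 0.
Proof. by case: hw => h _ _; apply: h. Qed.

Lemma w_coc x y z t : x \in G -> y \in G -> z \in G -> t \in G ->
  w y z t * w x (y * z)%g t * w x y z = w (x * y)%g z t * w x y (z * t)%g.
Proof. by case: hw => _ h _; apply: h. Qed.

Lemma w_norm x y : x \in G -> y \in G ->
  [/\ w 1%g x y = 1, w x 1%g y = 1 & w x y 1%g = 1].
Proof. by case: hw => _ _ h; apply: h. Qed.

Lemma inC x : x \in C -> x \in G /\ (a * x = x * a)%g.
Proof. by case/subcent1P. Qed.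

Lemma th_x1 x : x \in G -> th x 1%g = 1.
Proof.
move=> xG; rewrite /theta_cocycle.
by case: (w_norm aG xG) => _ _ ->; case: (w_norm xG aG) => _ -> _;
  case: (w_norm xG aG) => _ _ ->; rewrite mulr1 divr1.
Qed.

Lemma th_1x x : x \in G -> th 1%g x = 1.
Proof.
move=> xG; rewrite /theta_cocycle.
by case: (w_norm aG xG) => _ -> _; case: (w_norm xG aG) => -> _ _;
  case: (w_norm aG xG) => -> _ _; rewrite mulr1 divr1.
Qed.

Lemma th_neq0 x y : x \in G -> y \in G -> th x y != 0.
Proof.
move=> xG yG; rewrite /theta_cocycle.
by rewrite !mulf_neq0 ?invr_eq0 ?w_neq0 ?groupM.
Qed.

Lemma th_comm x : x \in G -> th a x = th x a.
Proof.
move=> xG; rewrite /theta_cocycle.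
rewrite mulrAC divff ?w_neq0 // mul1r.
by rewrite -mulrA divff ?w_neq0 // mulr1.
Qed.

Lemma th_coc u x y : u \in C -> x \in C -> y \in C ->
  th u x * th (u * x)%g y = th x y * th u (x * y)%g.
Proof.
move=> /inC[uG au] /inC[xG ax] /inC[yG ay].
have H1 := w_coc aG uG xG yG.
have H2 := w_coc uG aG xG yG.
have H3 := w_coc uG xG aG yG.
have H4 := w_coc uG xG yG aG.
rewrite au in H1; rewrite ax in H2; rewrite ay in H3.
have uxG := groupM uG xG; have xyG := groupM xG yG.
have nz := w_neq0.
set L1 := _ * _ * _ in H1. set R1 := _ * _ in H1.
set L2 := _ * _ * _ in H2. set R2 := _ * _ in H2.
set L3 := _ * _ * _ in H3. set R3 := _ * _ in H3.
set L4 := _ * _ * _ in H4. set R4 := _ * _ in H4.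
have Q : L4 * R3 * L2 * R1 = R4 * L3 * R2 * L1 by rewrite H1 H2 H3 H4.
have nzQ : L4 * R3 * L2 * R1 != 0.
  by rewrite /L4 /R3 /L2 /R1 !mulf_neq0 ?nz ?groupM.
have E : (w a u x * w u x a * w a (u*x)%g y * w (u*x)%g y a) *
         (w x a y * w u a (x*y)%g) =
         (w a x y * w x y a * w a u (x*y)%g * w u (x*y)%g a) *
         (w u a x * w (u*x)%g a y).
  apply: (mulIf nzQ); rewrite [in RHS]Q /L1 /R1 /L2 /R2 /L3 /R3 /L4 /R4; ring.
rewrite /theta_cocycle.
apply/eqP; rewrite -subr_eq0; apply/eqP.
have -> : w a u x * w u x a / w u a x * (w a (u * x)%g y * w (u * x)%g y a / w (u * x)%g a y) -
  w a x y * w x y a / w x a y * (w a u (x * y)%g * w u (x * y)%g a / w u a (x * y)%g)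
  = ((w a u x * w u x a * w a (u*x)%g y * w (u*x)%g y a) *
         (w x a y * w u a (x*y)%g) -
         (w a x y * w x y a * w a u (x*y)%g * w u (x*y)%g a) *
         (w u a x * w (u*x)%g a y)) / (w u a x * w (u*x)%g a y * w x a y * w u a (x*y)%g).
  by field; rewrite !nz ?groupM.
by rewrite E subrr mul0r.
Qed.



Local Notation N := #|C|.
Definition ev (i : 'I_N) : gT := enum_val i.

Lemma evC i : ev i \in C.
Proof. exact: enum_valP. Qed.

Lemma ev_inj : injective ev.
Proof. exact: enum_val_inj. Qed.

Definition Lm (x : gT) : 'M[algC]_N :=
  \matrix_(i, j) (if ev j == (ev i * x)%g then th (ev i) x else 0).

Definition dl (y : gT) : 'rV[algC]_N := \row_j ((ev j == y)%:R).

Lemma dl_ev i : dl (ev i) = delta_mx 0 i.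
Proof.
apply/rowP => j; rewrite !mxE (inj_eq ev_inj) eqxx /=.
by rewrite eq_sym.
Qed.

Lemma dlL y x : y \in C -> x \in C -> dl y *m Lm x = th y x *: dl (y * x)%g.
Proof.
move=> yC xC; apply/rowP => j; rewrite !mxE.
pose i0 := enum_rank_in yC y.
have ei0 : ev i0 = y by rewrite /ev /i0 enum_rankK_in.
rewrite (bigD1 i0) //= big1 => [|i ni0]; rewrite !mxE.
  rewrite ei0 eqxx mul1r addr0.
  by case: eqP => _; rewrite ?mulr1 ?mulr0.
suff -> : (ev i == y) = false by rewrite mul0r.
by apply/negbTE; apply: contra ni0 => /eqP; rewrite -ei0 => /ev_inj ->.
Qed.

Lemma rows_eq m (M1 M2 : 'M[algC]_(N, m)) :
  (forall i, dl (ev i) *m M1 = dl (ev i) *m M2) -> M1 = M2.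
Proof.
by move=> h; apply/row_matrixP => i; rewrite !rowE -dl_ev h.
Qed.

Lemma L1 : Lm 1%g = 1%:M.
Proof.
apply: rows_eq => i; rewrite dlL ?group1 ?evC // mulmx1 mulg1.
by rewrite th_x1 ?scale1r //; case/inC: (evC i).
Qed.

Lemma LM x y : x \in C -> y \in C -> Lm x *m Lm y = th x y *: Lm (x * y)%g.
Proof.
move=> xC yC; apply: rows_eq => i.
rewrite mulmxA dlL ?evC // -(scalemxAl (th (ev i) x)).
rewrite dlL ?groupM ?evC // -(scalemxAr (th x y)) dlL ?evC ?groupM //.
by rewrite !scalerA mulgA th_coc ?evC // mulrC.
Qed.

Lemma aC : a \in C.
Proof. by apply/subcent1P; split. Qed.

Lemma Lcomm x : x \in C -> Lm a *m Lm x = Lm x *m Lm a.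
Proof.
move=> xC; rewrite !LM ?aC //; case/inC: (xC) => xG ->.
by rewrite th_comm.
Qed.

Definition invar m (U : 'M[algC]_(m, N)) :=
  forall x, x \in C -> (U *m Lm x <= U)%MS.

Lemma min_exists (U : 'M[algC]_N) : \rank U != 0%N -> invar U ->
  exists U' : 'M[algC]_N, [/\ (U' <= U)%MS, \rank U' != 0%N, invar U' &
    forall V : 'M[algC]_N, (V <= U')%MS -> invar V ->
      \rank V = 0%N \/ \rank V = \rank U'].
Proof.
have: forall k (U : 'M[algC]_N), (\rank U <= k)%N -> \rank U != 0%N -> invar U ->
  exists U' : 'M[algC]_N, [/\ (U' <= U)%MS, \rank U' != 0%N, invar U' &
    forall V : 'M[algC]_N, (V <= U')%MS -> invar V ->
      \rank V = 0%N \/ \rank V = \rank U'].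
  elim=> [|k IH] {}U hk hr hU.
    by move: hr; rewrite -leqn0 hk.
  case: (Classical_Prop.classic (forall V : 'M[algC]_N, (V <= U)%MS -> invar V ->
      \rank V = 0%N \/ \rank V = \rank U)) => [H|H].
    by exists U; split.
  have [V HV] := Classical_Pred_Type.not_all_ex_not _ _ H.
  have [VU iV r0 rU] : [/\ (V <= U)%MS, invar V, \rank V <> 0%N & \rank V <> \rank U].
    apply: Classical_Prop.NNPP => HH; apply: HV => VU iV.
    case: (eqVneq (\rank V) 0%N) => [->|r0]; first by left.
    case: (eqVneq (\rank V) (\rank U)) => [->|rU]; first by right.
    by case: HH; split => //; apply/eqP.
  have ltVU : (\rank V < \rank U)%N.
    by rewrite ltn_neqAle mxrankS // andbT; apply/eqP.
  have [U' [U'V r' iU' mU']] := IH V (leq_trans ltVU hk) (introN eqP r0) iV.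
  by exists U'; split => //; apply: submx_trans U'V VU.
by move=> h hr hU; apply: (h (\rank U)).
Qed.

Lemma twist_of_eig (nu : algC) (v : 'rV[algC]_N) :
  v != 0 -> v *m Lm a = nu *: v -> is_twist G w nu.
Proof.
move=> v0 hv.
pose E := kermx (Lm a - nu%:M).
have vE : (v <= E)%MS.
  by apply/sub_kermxP; rewrite mulmxBr mul_mx_scalar hv subrr.
have rE : \rank E != 0%N.
  rewrite mxrank_eq0; apply: contra v0 => /eqP E0.
  by move: vE; rewrite E0 submx0.
have EA : E *m Lm a = nu *: E.
  by apply/eqP; rewrite -subr_eq0 -mul_mx_scalar -mulmxBr mulmx_ker.
have invE : invar E.
  move=> x xC; apply/sub_kermxP.
  rewrite mulmxBr -mulmxA -Lcomm // mulmxA EA mul_mx_scalar -scalemxAl.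
  by rewrite subrr.
have [U [UE rU iU mU]] := min_exists rE invE.
pose B := row_base U.
have Bfree : row_free B := row_base_free U.
have BU : (B :=: U)%MS := eq_row_base U.
pose rho x := B *m Lm x *m pinvmx B.
have BL x : x \in C -> rho x *m B = B *m Lm x.
  move=> xC; apply: mulmxKpV.
  by rewrite (eqmxMr _ BU) BU; apply: iU.
exists a; split => //; exists (\rank U), rho; split.
- split; first by rewrite /rho L1 mulmx1 mulmxVp.
  move=> x y xC yC.
  have -> : rho x *m rho y = (rho x *m B) *m Lm y *m pinvmx B by rewrite /rho !mulmxA.
  rewrite BL // -(mulmxA B) LM //.
  by rewrite -(scalemxAr (th x y)) -(scalemxAl (th x y)).
- split; first by rewrite lt0n.
  move=> W iW.
  pose V := <<W *m B>>%MS.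
  have VU : (V <= U)%MS.
    by rewrite genmxE; apply: submx_trans (submxMl W B) _; rewrite BU.
  have iV : invar V.
    move=> x xC; rewrite genmxE (eqmxMr _ (genmxE _)).
    by rewrite -mulmxA -BL // mulmxA submxMr // iW.
  by have [h|h] := mU V VU iV; move: h; rewrite genmxE mxrankMfree //; [left|right].
- have BE : (B <= E)%MS by rewrite BU.
  have BA : B *m Lm a = nu *: B.
    move/sub_kermxP: BE; rewrite mulmxBr mul_mx_scalar => /eqP.
    by rewrite subr_eq0 => /eqP.
  by rewrite /rho BA -scalemxAl mulmxVp // scalemx1.
Qed.

Definition uu j := iter j (fun v => v *m Lm a) (dl 1%g).
Definition beta j := \prod_(i < j) th (a ^+ i)%g a.

Lemma u_eq j : uu j = beta j *: dl (a ^+ j)%g.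
Proof.
elim: j => [|j IH]; first by rewrite /uu /= /beta big_ord0 expg0 scale1r.
rewrite /uu iterS -/(uu j) IH -scalemxAl dlL ?groupX ?aC // scalerA.
by rewrite /beta big_ord_recr /= expgSr.
Qed.

Lemma beta_neq0 j : beta j != 0.
Proof.
rewrite /beta; apply/prodf_neq0 => i _.
by apply: th_neq0; rewrite ?groupX.
Qed.

Lemma eig_exists (nu : algC) : nu ^+ #[a]%g = beta #[a]%g ->
  exists v : 'rV[algC]_N, v != 0 /\ v *m Lm a = nu *: v.
Proof.
move=> hnu; set k := #[a]%g in hnu *.
have k0 : (0 < k)%N := order_gt0 a.
pose F j := nu ^+ (k - j) *: uu j.
pose v := \sum_(j < k) nu ^+ (k - j.+1) *: uu j.
exists v; split.
  have ak : (a ^+ k.-1)%g \in C by rewrite groupX ?aC.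
  pose i0 := enum_rank_in ak (a ^+ k.-1)%g.
  have ei0 : ev i0 = (a ^+ k.-1)%g by rewrite /ev /i0 enum_rankK_in.
  apply/eqP => /rowP /(_ i0); rewrite summxE mxE.
  have jk : (k.-1 < k)%N by rewrite prednK.
  rewrite (bigD1 (Ordinal jk)) //= big1 => [|j nj].
    rewrite addr0 !mxE u_eq !mxE ei0 eqxx mulr1 prednK // subnn expr0 mul1r.
    by apply/eqP; apply: beta_neq0.
  rewrite !mxE u_eq !mxE ei0 eq_expg_mod_order !modn_small //.
  suff -> : (k.-1 == j) = false by rewrite !mulr0.
  by apply/negbTE; apply: contra nj => /eqP e; apply/eqP/val_inj; rewrite /= e.
apply/eqP; rewrite -subr_eq0.
have -> : v *m Lm a - nu *: v = \sum_(j < k) (F j.+1 - F j).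
  rewrite mulmx_suml scaler_sumr -sumrB; apply: eq_bigr => j _.
  rewrite /F -scalemxAl scalerA -exprS subnSK //.
rewrite -(big_mkord xpredT (fun j => F j.+1 - F j)) telescope_sumr //.
rewrite /F subnn expr0 scale1r subn0 /uu -/(uu k) u_eq expg_order hnu.
by rewrite subrr.
Qed.
End Cocycle.

Lemma one_neq_m1 : (1 : algC) != -1.
Proof.
apply/eqP; move/(congr1 (fun x => 1 + x)); rewrite subrr -mulr2n => /eqP.
by rewrite pnatr_eq0.
Qed.

Lemma S_pair (y : algC) : [\/ y = 1, y = 'i | y = - 'i] ->
  [\/ - y = 1, - y = 'i | - y = - 'i] -> y ^+ 2 = -1.
Proof.
move=> hy hny; case: hy => [e||->]; last by rewrite sqrrN sqrCi.
- rewrite e in hny; exfalso; apply/(negP one_neq_m1)/eqP.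
  case: hny => h.
  + by rewrite h.
  + by move: (sqrCi algC); rewrite -h sqrrN expr1n => e1; exact: e1.
  + by move/oppr_inj: h => h; move: (sqrCi algC); rewrite -h expr1n => e1; exact: e1.
- by move=> ->; rewrite sqrCi.
Qed.

Theorem lemma5p12 (gT : finGroupType) (G : {group gT})
    (w : gT -> gT -> gT -> algC) :
  (2.-group G)%g ->
  normalized_3cocycle G w ->
  (forall t : algC, is_twist G w t <-> [\/ t = 1, t = 'i | t = - 'i]) ->
  forall n (rG : mx_representation algC G n),
    mx_irreducible rG -> mx_rsim rG (dual_repr rG).
Proof.
move=> p2 hw htw n rG _.
have inv2 : forall g, g \in G -> (g ^+ 2 = 1)%g.
  move=> g gG; apply/eqP; apply: contraT => ng.
  set k := #[g]%g.
  have k0 : (0 < k)%N := order_gt0 g.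
  have [e ke] := p_natP (pnat_dvd (order_dvdG gG) p2); rewrite -/k in ke.
  have k4 : (4 %| k)%N.
    rewrite ke (_ : 4 = 2 ^ 2)%N // dvdn_exp2l //.
    case: e ke => [|[|e]] ke //; by move: ng; rewrite -order_dvdn -/k ke.
  set c := beta w g k.
  have hc : (k.-root c) ^+ k = c by rewrite rootCK.
  have tw z : z ^+ 4 = 1 -> [\/ k.-root c * z = 1, k.-root c * z = 'i | k.-root c * z = - 'i].
    move=> z4; apply/htw.
    have hk : (k.-root c * z) ^+ k = beta w g k.
      have zk : z ^+ k = 1 by rewrite -(divnK k4) mulnC exprM z4 expr1n.
      by rewrite exprMn hc zk mulr1.
    have [v [v0 hv]] := eig_exists hw gG hk.
    exact: (twist_of_eig hw gG v0 hv).
  have i4 : ('i : algC) ^+ 4 = 1.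
    by rewrite (_ : 4 = 2 * 2)%N // exprM sqrCi sqrrN expr1n.
  have m4 : (-1 : algC) ^+ 4 = 1 by rewrite (_ : 4 = 2 * 2)%N // exprM sqrrN !expr1n.
  have mi4 : (- 'i : algC) ^+ 4 = 1 by rewrite -mulN1r exprMn m4 i4 mulr1.
  have h1 : (k.-root c) ^+ 2 = -1.
    apply: S_pair; first by have := tw _ (expr1n _ 4); rewrite mulr1.
    by have := tw _ m4; rewrite mulrN1.
  have h3 : (k.-root c * 'i) ^+ 2 = -1.
    apply: S_pair; first exact: tw _ i4.
    by have := tw _ mi4; rewrite mulrN.
  move: h3; rewrite exprMn h1 sqrCi mulrNN mulr1 => /eqP.
  by rewrite (negbTE one_neq_m1).
apply/cfRepr_rsimP; apply/eqP/cfunP => g.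
rewrite /cfRepr !cfunElock.
case gG: (g \in G); last by rewrite !mulr0n.
have gi : (g^-1 = g)%g.
  by apply: (mulgI g); rewrite mulgV -expg2 inv2.
by rewrite /= gi mxtrace_tr.
Qed.
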